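(* For every integer $i\ge 2$, $\overline{\alpha}(\{1,3,2i\})=\frac{i}{2i+3}$.
   Context: For a finite set $S$ of positive integers, the distance graph $G(S)$ has vertex set $\mathbb{Z}$, with $i,j$ adjacent iff $|i-j|\in S$. The density of $A\subseteq\mathbb{Z}$ is $\delta(A)=\limsup_{N\to\infty}\frac{|A\cap[-N,N]|}{2N+1}$, and the independence ratio $\overline{\alpha}(S)$ is the supremum of $\delta(A)$ over independent sets $A$ of $G(S)$. *)

(* Defs.v *)
From Stdlib Require Import Reals ZArith List ClassicalEpsilon.
From Coquelicot Require Import Coquelicot.
Open Scope R_scope.

(* Distance graph G(S) on Z, S given as a finite list of positive integers:
   i, j adjacent iff |i - j| is in S. *)
Definition independent (S : list Z) (A : Z -> Prop) : Prop :=
  forall x y : Z, A x -> A y -> ~ In (Z.abs (x - y)) S.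

Definition count_in (A : Z -> Prop) (N : nat) : nat :=
  fold_right (fun k acc =>
      (if excluded_middle_informative (A k) then 1 else 0) + acc)%nat
    0%nat
    (map (fun m => (Z.of_nat m - Z.of_nat N)%Z) (seq 0 (2 * N + 1))).

Definition density (A : Z -> Prop) : Rbar :=
  LimSup_seq (fun N => INR (count_in A N) / INR (2 * N + 1)).

Definition indep_ratio (S : list Z) : Rbar :=
  Lub_Rbar (fun r => exists A, independent S A /\ density A = Finite r).

(* Main.v *)
Require Import Defs.
From Stdlib Require Import Reals ZArith List Lia Lra ClassicalEpsilon.
From Coquelicot Require Import Coquelicot.
Open Scope R_scope.

Definition indA (A : Z -> Prop) (x : Z) : nat :=
  if excluded_middle_informative (A x) then 1%nat else 0%nat.

Fixpoint cnt (A : Z -> Prop) (a : Z) (m : nat) : nat :=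
  match m with O => O | S m' => (indA A a + cnt A (a + 1) m')%nat end.

Lemma ind_t A x : A x -> indA A x = 1%nat.
Proof. unfold indA; destruct excluded_middle_informative; tauto. Qed.
Lemma ind_f A x : ~ A x -> indA A x = 0%nat.
Proof. unfold indA; destruct excluded_middle_informative; tauto. Qed.
Lemma ind_le A x : (indA A x <= 1)%nat.
Proof. unfold indA; destruct excluded_middle_informative; lia. Qed.

Lemma count_gen A N n s :
  fold_right (fun k acc =>
      (if excluded_middle_informative (A k) then 1 else 0) + acc)%nat
    0%nat
    (map (fun m => (Z.of_nat m - Z.of_nat N)%Z) (seq s n))
  = cnt A (Z.of_nat s - Z.of_nat N) n.
Proof.
  revert s; induction n; intros s; simpl; auto.
  rewrite IHn. unfold indA. f_equal. f_equal. lia.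
Qed.

Lemma count_in_cnt A N : count_in A N = cnt A (- Z.of_nat N) (2 * N + 1).
Proof. unfold count_in. rewrite count_gen. f_equal. Qed.

Lemma cnt_add A m k : forall a, cnt A a (m + k) = (cnt A a m + cnt A (a + Z.of_nat m) k)%nat.
Proof.
  induction m; intros a; simpl.
  - f_equal; lia.
  - rewrite IHm. replace (a + 1 + Z.of_nat m)%Z with (a + Z.pos (Pos.of_succ_nat m))%Z by lia. lia.
Qed.

Lemma cnt_le A m : forall a, (cnt A a m <= m)%nat.
Proof. induction m; intros a; simpl; auto. pose proof (ind_le A a); specialize (IHm (a+1)%Z); lia. Qed.

Section S13.
Variable A : Z -> Prop.
Hypothesis H1 : forall x, A x -> A (x + 1)%Z -> False.
Hypothesis H3 : forall x, A x -> A (x + 3)%Z -> False.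

Lemma Li : forall m a, (2 * cnt A a m <= m + 1)%nat.
Proof.
  assert (forall m, (forall a, 2 * cnt A a m <= m + 1) /\ (forall a, 2 * cnt A a (S m) <= m + 2))%nat.
  { induction m.
    - split; intros a; simpl; try lia. pose proof (ind_le A a); lia.
    - destruct IHm as [Ha Hb]; split; [intros a; specialize (Hb a); lia|]. intros a.
      cbn [cnt].
      destruct (classic (A a)) as [h|h].
      + rewrite (ind_t _ _ h). cbn [cnt]. rewrite (ind_f A (a+1)). 2: (intro HH; exact (H1 a h HH)).
        specialize (Ha (a+1+1)%Z). lia.
      + rewrite (ind_f _ _ h). specialize (Hb (a+1)%Z). cbn [cnt] in Hb. lia. }
  intros m a; apply H.
Qed.

Lemma LR : forall m a, (2 * cnt A a m = m + 1)%nat ->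
  forall j, (2 * j < m)%nat -> A (a + 2 * Z.of_nat j)%Z.
Proof.
  intros m; induction m as [m IH] using lt_wf_ind; intros a Hc j Hj.
  destruct m as [|m']; [cbn [cnt] in Hc; lia|].
  cbn [cnt] in Hc.
  destruct (classic (A a)) as [h|h].
  - rewrite (ind_t _ _ h) in Hc.
    destruct m' as [|m'']. { assert (j = 0)%nat by lia; subst; simpl. rewrite Z.add_0_r; auto. }
    cbn [cnt] in Hc. rewrite (ind_f A (a+1)) in Hc. 2: (intro HH; exact (H1 a h HH)).
    destruct j as [|j']. { simpl; rewrite Z.add_0_r; auto. }
    assert (HH := IH m'' ltac:(lia) (a+1+1)%Z ltac:(lia) j' ltac:(lia)).
    replace (a + 2 * Z.of_nat (S j'))%Z with (a + 1 + 1 + 2 * Z.of_nat j')%Z by lia. auto.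
  - rewrite (ind_f _ _ h) in Hc. pose proof (Li m' (a+1)%Z). lia.
Qed.

Lemma LR2 : forall m a, (2 * cnt A a m = m)%nat ->
  (forall j, (2 * j + 2 <= m)%nat -> A (a + 2 * Z.of_nat j)%Z) \/
  (forall j, (2 * j + 2 <= m)%nat -> A (a + 1 + 2 * Z.of_nat j)%Z).
Proof.
  intros m; induction m as [m IH] using lt_wf_ind; intros a Hc.
  destruct m as [|m']; [left; intros; lia|].
  cbn [cnt] in Hc.
  destruct (classic (A a)) as [h|h].
  - rewrite (ind_t _ _ h) in Hc.
    destruct m' as [|m'']. { cbn [cnt] in Hc; lia. }
    cbn [cnt] in Hc. rewrite (ind_f A (a+1)) in Hc. 2: (intro HH; exact (H1 a h HH)).
    destruct (le_lt_dec 2 m'') as [Hm|Hm].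
    + destruct (IH m'' ltac:(lia) (a+1+1)%Z ltac:(lia)) as [L|R].
      * left. intros [|j'] Hj. { simpl; rewrite Z.add_0_r; auto. }
        replace (a + 2 * Z.of_nat (S j'))%Z with (a + 1 + 1 + 2 * Z.of_nat j')%Z by lia.
        apply L; lia.
      * exfalso. specialize (R 0%nat ltac:(lia)). apply (H3 a h).
        replace (a+3)%Z with (a + 1 + 1 + 1 + 2 * Z.of_nat 0)%Z by lia. auto.
    + left. intros j Hj. assert (j = 0)%nat by lia; subst; simpl; rewrite Z.add_0_r; auto.
  - rewrite (ind_f _ _ h) in Hc. right. intros j Hj.
    apply (LR m' (a+1)%Z ltac:(lia)); lia.
Qed.

End S13.

Section W.
Variable A : Z -> Prop.
Variable n : nat.
Hypothesis Hn : (2 <= n)%nat.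
Hypothesis H1 : forall x, A x -> A (x + 1)%Z -> False.
Hypothesis H3 : forall x, A x -> A (x + 3)%Z -> False.
Hypothesis H2 : forall x, A x -> A (x + 2 * Z.of_nat n)%Z -> False.

Lemma AE : forall x y, x = y -> A x -> A y.
Proof. intros; subst; auto. Qed.

Lemma R2contra : forall a, (2 * cnt A a (2 * n + 2) = 2 * n + 2)%nat -> False.
Proof.
  intros a Hc. destruct (LR2 A H1 H3 _ a Hc) as [L|L].
  - apply (H2 a). apply (AE (a + 2 * Z.of_nat 0)); [lia| apply L; lia].
    apply (AE (a + 2 * Z.of_nat n)); [lia| apply L; lia].
  - apply (H2 (a+1)). apply (AE (a + 1 + 2 * Z.of_nat 0)); [lia| apply L; lia].
    apply (AE (a + 1 + 2 * Z.of_nat n)); [lia| apply L; lia].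
Qed.

Lemma window : forall a, (cnt A a (2 * n + 3) <= n)%nat.
Proof.
  intros a. destruct (le_lt_dec (cnt A a (2 * n + 3)) n) as [h|h]; auto. exfalso.
  pose proof (Li A H1 (2 * n + 3) a) as HL.
  assert (Hc : (cnt A a (2 * n + 3) = n + 2)%nat \/ (cnt A a (2 * n + 3) = n + 1)%nat) by lia.
  destruct Hc as [Hc|Hc].
  - assert (Hc' : (2 * cnt A a (2 * n + 3) = 2 * n + 3 + 1)%nat) by lia.
    apply (H2 a). apply (AE (a + 2 * Z.of_nat 0)); [lia| apply (LR A H1 _ _ Hc'); lia].
    apply (LR A H1 _ _ Hc'); lia.
  - assert (Hc0 := Hc). replace (2 * n + 3)%nat with (2 * n + 2 + 1)%nat in Hc by lia.
    rewrite cnt_add in Hc. cbn [cnt] in Hc.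
    destruct (classic (A (a + Z.of_nat (2 * n + 2)))%Z) as [hb|hb].
    2: { rewrite (ind_f _ _ hb) in Hc. apply (R2contra a); lia. }
    destruct (classic (A a)) as [ha|ha].
    2: { clear Hc; rename Hc0 into Hc. replace (2 * n + 3)%nat with (S (2 * n + 2)) in Hc by lia.
         cbn [cnt] in Hc. rewrite (ind_f _ _ ha) in Hc. apply (R2contra (a+1)); lia. }
    clear Hc; rename Hc0 into Hc.
    replace (2 * n + 3)%nat with (4 + ((2 * n - 4) + 3))%nat in Hc by lia.
    rewrite cnt_add, cnt_add in Hc. cbn [cnt] in Hc.
    assert (E1 : indA A (a + 1) = 0%nat) by (apply ind_f; intro HH; exact (H1 a ha HH)).
    assert (E2 : indA A (a + 1 + 1) = 0%nat).
    { apply ind_f; intro HH; apply (H2 _ HH). eapply AE; [|exact hb]; lia. }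
    assert (E3 : indA A (a + 1 + 1 + 1) = 0%nat).
    { apply ind_f; intro HH; apply (H3 _ ha). eapply AE; [|exact HH]; lia. }
    assert (E4 : indA A (a + Z.of_nat 4 + Z.of_nat (2 * n - 4)) = 0%nat).
    { apply ind_f; intro HH; apply (H2 _ ha). eapply AE; [|exact HH]; lia. }
    assert (E5 : indA A (a + Z.of_nat 4 + Z.of_nat (2 * n - 4) + 1) = 0%nat).
    { apply ind_f; intro HH; apply (H1 _ HH). eapply AE; [|exact hb]; lia. }
    rewrite (ind_t _ _ ha), E1, E2, E3, E4, E5 in Hc.
    rewrite (ind_t A (a + Z.of_nat 4 + Z.of_nat (2 * n - 4) + 1 + 1)) in Hc.
    2: eapply AE; [|exact hb]; lia.
    pose proof (Li A H1 (2 * n - 4) (a + Z.of_nat 4)). lia.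
Qed.

Lemma windows : forall q r a, (cnt A a (q * (2 * n + 3) + r) <= q * n + r)%nat.
Proof.
  induction q; intros r a.
  - simpl. apply cnt_le.
  - replace (S q * (2 * n + 3) + r)%nat with (2 * n + 3 + (q * (2 * n + 3) + r))%nat by lia.
    rewrite cnt_add. pose proof (window a). specialize (IHq r (a + Z.of_nat (2 * n + 3))%Z). lia.
Qed.

End W.

Definition SS (n : nat) : list Z := (1%Z :: 3%Z :: (2 * Z.of_nat n)%Z :: nil).

Lemma indep_facts n A : independent (SS n) A ->
  (forall x, A x -> A (x + 1)%Z -> False) /\
  (forall x, A x -> A (x + 3)%Z -> False) /\
  (forall x, A x -> A (x + 2 * Z.of_nat n)%Z -> False).
Proof.
  intros HI; split; [|split]; intros x hx hy; apply (HI _ _ hx hy).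
  - replace (Z.abs (x - (x + 1))) with 1%Z by lia; simpl; auto.
  - replace (Z.abs (x - (x + 3))) with 3%Z by lia; simpl; auto.
  - replace (Z.abs (x - (x + 2 * Z.of_nat n))) with (2 * Z.of_nat n)%Z by lia; simpl; auto.
Qed.

Lemma lim_c_over (c : R) : is_lim_seq (fun N => c / INR (2 * N + 1)) 0.
Proof.
  assert (Hinf : is_lim_seq (fun N => INR (2 * N + 1)) p_infty).
  { apply is_lim_seq_le_p_loc with (u := INR); [|exact is_lim_seq_INR].
    exists 0%nat; intros N _; apply le_INR; lia. }
  assert (Hz := is_lim_seq_inv _ _ Hinf ltac:(discriminate)).
  assert (Hs := is_lim_seq_scal_l _ c _ Hz).
  simpl in Hs. rewrite Rmult_0_r in Hs. exact Hs.
Qed.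

Lemma limsup_of_lim u (l : R) : is_lim_seq u l -> LimSup_seq u = l.
Proof. intros H; apply is_LimSup_seq_unique, is_lim_LimSup_seq, H. Qed.

Lemma ratio_up (c n p m : nat) : (0 < p)%nat -> (0 < m)%nat ->
  (p * c <= n * m + p * p)%nat -> INR c / INR m <= INR n / INR p + INR p / INR m.
Proof.
  intros Hp Hm H. apply le_INR in H. rewrite plus_INR, !mult_INR in H.
  apply lt_0_INR in Hp; apply lt_0_INR in Hm.
  apply Rmult_le_reg_r with (INR p * INR m); [apply Rmult_lt_0_compat; lra|].
  replace (INR c / INR m * (INR p * INR m)) with (INR p * INR c) by (field; lra).
  replace ((INR n / INR p + INR p / INR m) * (INR p * INR m)) with (INR n * INR m + INR p * INR p)
    by (field; lra). lra.
Qed.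

Lemma ratio_down (c n p m : nat) : (0 < p)%nat -> (0 < m)%nat ->
  (n * m <= p * c + n * p)%nat -> INR n / INR p - INR n / INR m <= INR c / INR m.
Proof.
  intros Hp Hm H. apply le_INR in H. rewrite plus_INR, !mult_INR in H.
  apply lt_0_INR in Hp; apply lt_0_INR in Hm.
  apply Rmult_le_reg_r with (INR p * INR m); [apply Rmult_lt_0_compat; lra|].
  replace (INR c / INR m * (INR p * INR m)) with (INR p * INR c) by (field; lra).
  replace ((INR n / INR p - INR n / INR m) * (INR p * INR m)) with (INR n * INR m - INR n * INR p)
    by (field; lra). lra.
Qed.

Lemma dens_le n A : (2 <= n)%nat -> independent (SS n) A ->
  Rbar_le (density A) (Finite (INR n / INR (2 * n + 3))).
Proof.
  intros Hn HI. destruct (indep_facts n A HI) as [H1 [H3 H2]].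
  unfold density.
  set (p := (2 * n + 3)%nat).
  rewrite <- (limsup_of_lim (fun N => INR n / INR p + INR p / INR (2 * N + 1))).
  2: { assert (L := is_lim_seq_plus' _ _ _ _ (is_lim_seq_const (INR n / INR p)) (lim_c_over (INR p))).
       rewrite Rplus_0_r in L. exact L. }
  apply LimSup_le. exists 0%nat. intros N _.
  apply ratio_up; [unfold p; lia | lia |].
  rewrite count_in_cnt.
  set (m := (2 * N + 1)%nat).
  assert (Hd := Nat.div_mod_eq m p). assert (Hr := Nat.mod_upper_bound m p ltac:(unfold p; lia)).
  set (q := (m / p)%nat) in *. set (r := (m mod p)%nat) in *.
  assert (Hw := windows A n Hn H1 H3 H2 q r (- Z.of_nat N)).
  replace (q * (2 * n + 3) + r)%nat with m in Hw by (unfold p in *; lia).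
  fold p in Hw. nia.
Qed.

Definition A0 (n : nat) (x : Z) : Prop :=
  (((x mod (2 * Z.of_nat n + 3)) mod 2 = 0) /\ (x mod (2 * Z.of_nat n + 3) <= 2 * Z.of_nat n - 2))%Z.

Lemma A0_indep n : (2 <= n)%nat -> independent (SS n) (A0 n).
Proof.
  intros Hn x y [hx1 hx2] [hy1 hy2] Hin. unfold SS in Hin; cbn [In] in Hin.
  set (P := (2 * Z.of_nat n + 3)%Z) in *.
  assert (HP : (0 < P)%Z) by (unfold P; lia).
  assert (Ex := Z.div_mod x P ltac:(lia)). assert (Bx := Z.mod_pos_bound x P HP).
  assert (Ey := Z.div_mod y P ltac:(lia)). assert (By := Z.mod_pos_bound y P HP).
  set (rx := (x mod P)%Z) in *. set (ry := (y mod P)%Z) in *.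
  assert (Erx := Z.div_mod rx 2 ltac:(lia)). assert (Ery := Z.div_mod ry 2 ltac:(lia)).
  rewrite hx1 in Erx; rewrite hy1 in Ery.
  set (qx := (x / P)%Z) in *. set (qy := (y / P)%Z) in *.
  set (hx := (rx / 2)%Z) in *. set (hy := (ry / 2)%Z) in *.
  clearbody qx qy hx hy rx ry. subst P.
  set (nn := Z.of_nat n) in *. assert (Hnn : (2 <= nn)%Z) by (unfold nn; lia). clearbody nn.
  set (k := (qx - qy)%Z).
  assert (Hd : (x - y = 2 * (nn * k) + 3 * k + 2 * (hx - hy))%Z) by (unfold k; nia).
  set (t := (nn * k)%Z) in *.
  assert (Hk : (k = 0 \/ k = 1 \/ k = -1 \/ k >= 2 \/ k <= -2)%Z) by lia.
  assert (Ht : ((k = 0 -> t = 0) /\ (k = 1 -> t = nn) /\ (k = -1 -> t = - nn) /\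
               (k >= 2 -> t >= 2 * nn) /\ (k <= -2 -> t <= -2 * nn))%Z).
  { unfold t; repeat split; intros; subst; nia. }
  clearbody t k.
  lia.
Qed.

Lemma indA_iff A x y : (A x <-> A y) -> indA A x = indA A y.
Proof.
  intros H. destruct (classic (A x)) as [h|h].
  - rewrite (ind_t _ _ h), (ind_t A y); tauto.
  - rewrite (ind_f _ _ h), (ind_f A y); tauto.
Qed.

Lemma A0_per n x : A0 n (x + Z.of_nat (2 * n + 3))%Z <-> A0 n x.
Proof.
  unfold A0. replace (x + Z.of_nat (2 * n + 3))%Z with (x + 1 * (2 * Z.of_nat n + 3))%Z by lia.
  rewrite Z.mod_add by lia. tauto.
Qed.

Lemma cnt_shift n a : cnt (A0 n) (a + 1) (2 * n + 3) = cnt (A0 n) a (2 * n + 3).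
Proof.
  assert (E := cnt_add (A0 n) (2 * n + 3) 1 a).
  replace (2 * n + 3 + 1)%nat with (S (2 * n + 3)) in E by lia.
  cbn [cnt] in E. rewrite (indA_iff _ _ _ (A0_per n a)) in E. lia.
Qed.

Lemma cnt_const n : forall a, cnt (A0 n) a (2 * n + 3) = cnt (A0 n) 0 (2 * n + 3).
Proof.
  assert (Hp : forall k, cnt (A0 n) (Z.of_nat k) (2 * n + 3) = cnt (A0 n) 0 (2 * n + 3)).
  { induction k; auto. rewrite Nat2Z.inj_succ, <- Z.add_1_r, cnt_shift; auto. }
  assert (Hm : forall k, cnt (A0 n) (- Z.of_nat k) (2 * n + 3) = cnt (A0 n) 0 (2 * n + 3)).
  { induction k; auto. rewrite <- IHk, <- (cnt_shift n). f_equal; lia. }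
  intros a. destruct (Z_le_gt_dec 0 a).
  - rewrite <- (Hp (Z.to_nat a)). f_equal; lia.
  - rewrite <- (Hm (Z.to_nat (- a))). f_equal; lia.
Qed.

Lemma A0_small n x : (0 <= x < 2 * Z.of_nat n + 3)%Z ->
  (A0 n x <-> (x mod 2 = 0 /\ x <= 2 * Z.of_nat n - 2)%Z).
Proof. intros H. unfold A0. rewrite (Z.mod_small x) by lia. tauto. Qed.

Lemma cnt0_even n : forall j, (j <= n)%nat -> cnt (A0 n) 0 (2 * j) = j.
Proof.
  induction j; intros Hj; auto.
  replace (2 * S j)%nat with (2 * j + 2)%nat by lia. rewrite cnt_add. cbn [cnt].
  rewrite IHj by lia.
  rewrite (ind_t (A0 n)). 2: { apply A0_small; [lia|]. split; [Z.div_mod_to_equations; lia | lia]. }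
  rewrite (ind_f (A0 n)). 2: { rewrite A0_small by lia. intros [h _]. Z.div_mod_to_equations; lia. }
  lia.
Qed.

Lemma cnt0 n : (2 <= n)%nat -> cnt (A0 n) 0 (2 * n + 3) = n.
Proof.
  intros Hn. rewrite cnt_add, cnt0_even by lia. cbn [cnt].
  rewrite !(ind_f (A0 n)); try lia; rewrite A0_small by lia; lia.
Qed.

Lemma cnt_windows n : (2 <= n)%nat -> forall q a, cnt (A0 n) a (q * (2 * n + 3)) = (q * n)%nat.
Proof.
  intros Hn; induction q; intros a; auto.
  replace (S q * (2 * n + 3))%nat with (2 * n + 3 + q * (2 * n + 3))%nat by lia.
  rewrite cnt_add, IHq, cnt_const, cnt0 by auto. lia.
Qed.

Lemma A0_density n : (2 <= n)%nat -> density (A0 n) = Finite (INR n / INR (2 * n + 3)).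
Proof.
  intros Hn. unfold density. set (p := (2 * n + 3)%nat). apply limsup_of_lim.
  apply is_lim_seq_le_le with (u := fun N => INR n / INR p - INR n / INR (2 * N + 1))
    (w := fun N => INR n / INR p + INR p / INR (2 * N + 1)).
  2: { assert (L := is_lim_seq_minus' _ _ _ _ (is_lim_seq_const (INR n / INR p)) (lim_c_over (INR n))).
       rewrite Rminus_0_r in L. exact L. }
  2: { assert (L := is_lim_seq_plus' _ _ _ _ (is_lim_seq_const (INR n / INR p)) (lim_c_over (INR p))).
       rewrite Rplus_0_r in L. exact L. }
  intros N. rewrite count_in_cnt.
  set (m := (2 * N + 1)%nat).
  assert (Hd := Nat.div_mod_eq m p). assert (Hr := Nat.mod_upper_bound m p ltac:(unfold p; lia)).
  set (q := (m / p)%nat) in *. set (r := (m mod p)%nat) in *.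
  assert (Hc : cnt (A0 n) (- Z.of_nat N) m = (q * n + cnt (A0 n) (- Z.of_nat N + Z.of_nat (q * p)) r)%nat).
  { replace m with (q * p + r)%nat at 1 by lia. rewrite cnt_add. unfold p. rewrite cnt_windows; auto. }
  pose proof (cnt_le (A0 n) r (- Z.of_nat N + Z.of_nat (q * p))%Z).
  split; [apply ratio_down | apply ratio_up]; try (unfold p; lia); try lia; nia.
Qed.

Theorem theorem27 (i : Z) (hi : (2 <= i)%Z) :
  indep_ratio (1%Z :: 3%Z :: (2 * i)%Z :: nil) = Finite (IZR i / IZR (2 * i + 3)).
Proof.
  set (n := Z.to_nat i).
  assert (Hi : i = Z.of_nat n) by (unfold n; lia).
  assert (Hn : (2 <= n)%nat) by lia.
  replace (IZR i / IZR (2 * i + 3)) with (INR n / INR (2 * n + 3)).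
  2: { rewrite !INR_IZR_INZ. f_equal; f_equal; lia. }
  replace (1%Z :: 3%Z :: (2 * i)%Z :: nil) with (SS n) by (unfold SS; rewrite Hi; auto).
  unfold indep_ratio. apply is_lub_Rbar_unique. split.
  - intros x [A [HA Hd]]. pose proof (dens_le n A Hn HA) as H. rewrite Hd in H. exact H.
  - intros b Hb. apply Hb. exists (A0 n). split; [apply A0_indep; auto | apply A0_density; auto].
Qed.
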